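(* The tropical Zariski topology on $\mathbb{R}^n$, whose closed sets are the congruence varieties $\boldsymbol{V}(E)$ for congruences $E$ on $\overline{\boldsymbol{T}(X_1,\ldots,X_n)}$, coincides with the Euclidean topology on $\mathbb{R}^n$.
   Context: $\boldsymbol{T}=\mathbb{R}\cup\{-\infty\}$ with $a\oplus b=\max\{a,b\}$, $a\odot b=a+b$. $\overline{\boldsymbol{T}[X_1,\ldots,X_n]}$ is the tropical polynomial semiring modulo identifying polynomials defining the same function $\boldsymbol{T}^n\to\boldsymbol{T}$; it is cancellative and $\overline{\boldsymbol{T}(X_1,\ldots,X_n)}$ is its semifield of fractions. Each element defines a function $\mathbb{R}^n\to\boldsymbol{T}$ (quotients evaluated as differences). A congruence is an equivalence relation compatible with $\oplus$ and $\odot$; $\boldsymbol{V}(E)=\{x\in\mathbb{R}^n\mid f(x)=g(x)\ \forall(f,g)\in E\}$. (These sets are closed under arbitrary intersections and finite unions and include $\varnothing$ and $\mathbb{R}^n$, so they form the closed sets of a topology.) *)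

(* Defs.v *)
From HB Require Import structures.
From mathcomp Require Import all_boot all_order all_algebra.
From mathcomp Require Import all_classical all_reals all_analysis.
Set Implicit Arguments. Unset Strict Implicit. Unset Printing Implicit Defensive.
Import Order.TTheory GRing.Theory Num.Theory.
Local Open Scope ring_scope.
Import numFieldNormedType.Exports.
Local Open Scope classical_set_scope.

(* The tropical semifield T = R ∪ {-oo} is modelled by \bar R (the value +oo
   never occurs); ⊕ = maxe, ⊙ = +%E. *)

(* A tropical polynomial in X_1..X_n: a finite list of monomials
   (c, a) meaning c ⊙ X^a, c : R (coefficients -oo are simply omitted),
   a : 'rV[nat]_n an exponent vector. *)
Definition tpoly (R : realType) (n : nat) := seq (R * 'rV[nat]_n).

Definition teval (R : realType) (n : nat) (p : tpoly R n) (x : 'rV[R]_n) : \bar R :=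
  \big[maxe/-oo%E]_(t <- p) (t.1 + \sum_(i < n) (t.2 ord0 i)%:R * x ord0 i)%:E.

(* Elements of the semifield of fractions of the function-quotient of
   T[X_1..X_n], represented by the functions R^n -> T they define:
   h = f ⊘ g (evaluated as f - g), with g a nonzero tropical polynomial. *)
Definition is_trat (R : realType) (n : nat) (h : 'rV[R]_n -> \bar R) : Prop :=
  exists (p q : tpoly R n), q != [::] /\ forall x, h x = (teval p x - teval q x)%E.

Definition tcongruence (R : realType) (n : nat)
    (E : ('rV[R]_n -> \bar R) -> ('rV[R]_n -> \bar R) -> Prop) : Prop :=
  [/\ (forall f g, E f g -> is_trat f /\ is_trat g),
      (forall f, is_trat f -> E f f),
      (forall f g, E f g -> E g f) /\
      (forall f g h, E f g -> E g h -> E f h),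
      (forall f g h, E f g -> is_trat h ->
          E (fun x => maxe (f x) (h x)) (fun x => maxe (g x) (h x)))
    & (forall f g h, E f g -> is_trat h ->
          E (fun x => (f x + h x)%E) (fun x => (g x + h x)%E))].

Definition tV (R : realType) (n : nat)
    (E : ('rV[R]_n -> \bar R) -> ('rV[R]_n -> \bar R) -> Prop) : set 'rV[R]_n :=
  [set x | forall f g, E f g -> f x = g x].

(* Main.v *)
Require Import Defs.
From HB Require Import structures.
From mathcomp Require Import all_boot all_order all_algebra.
From mathcomp Require Import all_classical all_reals all_analysis.
From mathcomp Require Import ring lra.
Import numFieldNormedType.Exports.
Local Open Scope classical_set_scope.
Import Order.TTheory GRing.Theory Num.Theory.
Local Open Scope ring_scope.

Section S.
Variables (R : realType) (n : nat).
Implicit Types (p q : tpoly R n) (x : 'rV[R]_n).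

Definition mv (t : R * 'rV[nat]_n) (x : 'rV[R]_n) : R :=
  t.1 + \sum_(i < n) (t.2 ord0 i)%:R * x ord0 i.

Lemma teval_cons t p x : teval (t :: p) x = maxe (mv t x)%:E (teval p x).
Proof. by rewrite /teval big_cons. Qed.

Lemma teval_nil x : teval ([::] : tpoly R n) x = -oo%E.
Proof. by rewrite /teval big_nil. Qed.

Lemma sum_cont (c : 'I_n -> R) (s : seq 'I_n) :
  continuous (fun x : 'rV[R]_n => \sum_(i <- s) c i * x ord0 i).
Proof.
elim: s => [|i s IH].
  under eq_fun do rewrite big_nil. exact: cst_continuous.
under eq_fun do rewrite big_cons.
move=> x.
have h1 : {for x, continuous (fun x : 'rV[R]_n => c i * x ord0 i : R^o)}.
  apply: (continuousM (s:=fun _ => c i) (t:=fun x : 'rV[R]_n => x ord0 i)).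
    exact: cst_continuous.
  exact: (@coord_continuous R 1 n ord0 i x).
exact: (@continuousD _ R^o _ _ _ x h1 (IH x)).
Qed.

Lemma mv_cont t : continuous (mv t).
Proof.
move=> x.
apply: (@continuousD _ R^o _ (fun _ => t.1) (fun x : 'rV[R]_n => \sum_(i < n) (t.2 ord0 i)%:R * x ord0 i) x).
  exact: cst_continuous.
exact: (sum_cont (fun i => (t.2 ord0 i)%:R)).
Qed.

Lemma maxEFin' (a b : R) : maxe a%:E b%:E = (Num.max a b)%:E.
Proof. by rewrite !maxEle lee_fin; case: ifP. Qed.

Lemma teval_fin (p : tpoly R n) : p != [::] ->
  exists F : 'rV[R]_n -> R, continuous F /\ forall x, teval p x = (F x)%:E.
Proof.
elim: p => [//|t p IH] _.
have [->|pn0] := eqVneq p [::].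
  exists (mv t); split; first exact: mv_cont.
  by move=> x; rewrite teval_cons teval_nil maxeNy.
have [F [Fc FE]] := IH pn0.
exists (fun x => Num.max (mv t x) (F x)); split.
  move=> x; apply: (@continuous_max _ _ (mv t) F); [exact: mv_cont|exact: Fc].
by move=> x; rewrite teval_cons FE maxEFin'.
Qed.

Lemma trat_cases (f : 'rV[R]_n -> \bar R) : is_trat f ->
  (forall x, f x = -oo%E) \/
  exists F : 'rV[R]_n -> R, continuous F /\ forall x, f x = (F x)%:E.
Proof.
move=> [p [q [qn0 fE]]].
have [G [Gc GE]] := @teval_fin q qn0.
have [peq|pn0] := eqVneq p [::].
  by left=> x; rewrite fE peq teval_nil GE.
have [F [Fc FE]] := @teval_fin p pn0.
right; exists (fun x => F x - G x); split.
  by move=> x; exact: (@continuousB _ R^o _ F G x (Fc x) (Gc x)).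
by move=> x; rewrite fE FE GE.
Qed.

Lemma closed_eqset (f g : 'rV[R]_n -> \bar R) : is_trat f -> is_trat g -> closed [set x | f x = g x].
Proof.
move=> /trat_cases [fE|[F [Fc FE]]] /trat_cases [gE|[G [Gc GE]]].
- rewrite (_ : [set x | f x = g x] = setT); first exact: closedT.
  by apply/seteqP; split=> x //= _; rewrite fE gE.
- rewrite (_ : [set x | f x = g x] = set0); first exact: closed0.
  by apply/seteqP; split=> x //=; rewrite fE GE.
- rewrite (_ : [set x | f x = g x] = set0); first exact: closed0.
  by apply/seteqP; split=> x //=; rewrite FE gE.
rewrite (_ : [set x | f x = g x] = (fun x => F x - G x) @^-1` [set y | y = 0]).
  apply: preimage_closed; last exact: closed_eq.
  move=> x _; exact: (@continuousB _ R^o _ F G x (Fc x) (Gc x)).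
apply/seteqP; split=> x /=; rewrite FE GE.
  by move=> [->]; rewrite subrr.
by move/eqP; rewrite subr_eq0 => /eqP ->.
Qed.

Fixpoint pmul (p q : tpoly R n) : tpoly R n :=
  match p with
  | [::] => [::]
  | a :: p' => [seq (a.1 + b.1, a.2 + b.2) | b <- q] ++ pmul p' q
  end.

Lemma teval_cat p q x : teval (p ++ q) x = maxe (teval p x) (teval q x).
Proof. by rewrite /teval big_cat. Qed.

Lemma mvD a b x : mv (a.1 + b.1, a.2 + b.2) x = mv a x + mv b x.
Proof.
rewrite /mv /=.
under eq_bigr do rewrite mxE natrD mulrDl.
rewrite big_split /=.
by rewrite addrACA.
Qed.

Lemma teval_mul p q x : teval (pmul p q) x = (teval p x + teval q x)%E.
Proof.
elim: p => [|a p IH] /=.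
  by rewrite teval_nil addNye.
rewrite teval_cat IH teval_cons adde_maxl; congr maxe.
rewrite /teval big_map.
clear IH; elim: q => [|b q IHq]; first by rewrite !big_nil addeNy.
have := mvD a b x; rewrite /mv /= => h.
by rewrite !big_cons IHq /= h EFinD adde_maxr.
Qed.

Lemma pmul_nil p q : p != [::] -> q != [::] -> pmul p q != [::].
Proof. by case: p => [|a p] //; case: q. Qed.

Lemma trat_max (f h : 'rV[R]_n -> \bar R) : is_trat f -> is_trat h ->
  is_trat (fun x => maxe (f x) (h x)).
Proof.
move=> [p [q [qn0 fE]]] [p' [q' [qn0' hE]]].
exists (pmul p q' ++ pmul p' q), (pmul q q'); split; first exact: pmul_nil.
move=> x; rewrite fE hE teval_cat !teval_mul.
have [G [_ GE]] := @teval_fin q qn0.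
have [G' [_ GE']] := @teval_fin q' qn0'.
rewrite !GE !GE' -EFinD adde_maxl.
congr maxe.
all: rewrite -?addeA -EFinB -EFinN; try (congr (_ + (EFin _))%E; ring).
all: idtac.
Qed.

Lemma trat_add (f h : 'rV[R]_n -> \bar R) : is_trat f -> is_trat h ->
  is_trat (fun x => (f x + h x)%E).
Proof.
move=> [p [q [qn0 fE]]] [p' [q' [qn0' hE]]].
exists (pmul p p'), (pmul q q'); split; first exact: pmul_nil.
move=> x; rewrite fE hE !teval_mul.
have [G [_ GE]] := @teval_fin q qn0.
have [G' [_ GE']] := @teval_fin q' qn0'.
rewrite !GE !GE' -!EFinN addeACA -EFinD; congr (_ + _)%E; congr EFin; ring.
Qed.

Lemma teval_ge p x t : t \in p -> ((mv t x)%:E <= teval p x)%E.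
Proof.
elim: p => [//|a p IH]; rewrite in_cons teval_cons le_max => /orP [/eqP ->|/IH ->].
  by rewrite lexx.
by rewrite orbT.
Qed.

Lemma teval_lt p x b : (forall t, t \in p -> mv t x < b) -> (teval p x < b%:E)%E.
Proof.
elim: p => [|a p IH] H; first by rewrite teval_nil ltNyr.
rewrite teval_cons gt_max lte_fin H ?mem_head //=.
by apply: IH => t tp; apply: H; rewrite in_cons tp orbT.
Qed.

Definition Msum x := \sum_(k < n) x ord0 k.
Definition ones : 'rV[nat]_n := const_mx 1%N.
Definition upv (j : 'I_n) : 'rV[nat]_n := \row_k (if k == j then 2 else 1)%N.
Definition dnv (j : 'I_n) : 'rV[nat]_n := \row_k (if k == j then 0 else 1)%N.

Lemma mv_ones c x : mv (c, ones) x = c + Msum x.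
Proof. by rewrite /mv /Msum /=; congr (_ + _); apply: eq_bigr => k _; rewrite mxE mul1r. Qed.

Lemma mv_up c j x : mv (c, upv j) x = c + Msum x + x ord0 j.
Proof.
rewrite /mv /Msum /= -addrA; congr (_ + _).
rewrite (bigD1 j) //= (bigD1 j (P := predT)) //= mxE eqxx.
rewrite (eq_bigr (fun k => x ord0 k)); last first.
  by move=> k /negbTE kj; rewrite mxE kj mul1r.
rewrite (_ : (2%N%:R : R) = 1 + 1) ?mulrDl ?mul1r; last by [].
by rewrite addrAC.
Qed.

Lemma mv_dn c j x : mv (c, dnv j) x = c + Msum x - x ord0 j.
Proof.
rewrite /mv /Msum /= -addrA; congr (_ + _).
rewrite (bigD1 j) //= (bigD1 j (P := predT)) //= mxE eqxx mul0r add0r.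
rewrite (eq_bigr (fun k => x ord0 k)); last first.
  by move=> k /negbTE kj; rewrite mxE kj mul1r.
by rewrite addrAC subrr add0r.
Qed.

Definition sepq (y : 'rV[R]_n) (r : R) : tpoly R n :=
  (r / 2, ones) :: [seq (- y ord0 j, upv j) | j <- enum 'I_n]
                ++ [seq (y ord0 j, dnv j) | j <- enum 'I_n].

Lemma sep (A : set 'rV[R]_n) (y : 'rV[R]_n) : closed A -> ~ A y ->
  exists f g, is_trat f /\ is_trat g /\ (forall x, A x -> f x = g x) /\ f y <> g y.
Proof.
move=> Ac nAy.
have : nbhs y (~` A) by apply: (closed_openC Ac) => //.
move=> /nbhs_ballP [r r0 rA]; have r0p : 0 < r := r0.
set q := sepq y r; set p := (r, ones) :: q.
exists (fun x => teval p x - teval q x)%E, (fun x => teval q x - teval q x)%E.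
have qn0 : q != [::] by [].
split; first by exists p, q.
split; first by exists q, q.
split.
  move=> x Ax; rewrite /p teval_cons mv_ones.
  have [h|h] := leP ((r + Msum x)%:E) (teval q x);  first by move: h; rewrite /maxe; case: (teval q x) => //=.
  exfalso; apply: (rA x) => //; split => // i j; rewrite (ord1 i) /ball /=.
  rewrite ltr_norml; apply/andP; split.
    have := @teval_ge q x (- y ord0 j, upv j).
    have mem : (- y ord0 j, upv j) \in q.
      by rewrite /q /sepq in_cons mem_cat; apply/orP; right; apply/orP; left; apply: map_f; rewrite mem_enum.
    rewrite mv_up => H; have := le_lt_trans (H mem) h.
    rewrite lte_fin; lra.
  have := @teval_ge q x (y ord0 j, dnv j).
  have mem : (y ord0 j, dnv j) \in q.
    by rewrite /q /sepq in_cons mem_cat; apply/orP; right; apply/orP; right; apply: map_f; rewrite mem_enum.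
  rewrite mv_dn => H; have := le_lt_trans (H mem) h.
  rewrite lte_fin; lra.
have lt : (teval q y < (r + Msum y)%:E)%E.
  apply: teval_lt => t; rewrite /q /sepq in_cons mem_cat => /orP [/eqP ->|/orP [/mapP [j _ ->]|/mapP [j _ ->]]].
  - rewrite mv_ones; lra.
  - rewrite mv_up; lra.
  - rewrite mv_dn; lra.
rewrite /p teval_cons mv_ones max_l; last exact: ltW.
have [G [_ GE]] := @teval_fin q qn0.
move: lt; rewrite !GE lte_fin -!EFinB => lt [] /eqP; rewrite subrr subr_eq0; lra.
Qed.
End S.

Theorem proposition3p9 (R : realType) (n : nat) (A : set 'rV[R]_n) :
  closed A <-> exists E, tcongruence E /\ A = tV E.
Proof.
split.
  move=> Ac.
  exists (fun f g => [/\ is_trat f, is_trat g & forall x, A x -> f x = g x]).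
  split.
    split.
    - by move=> f g [].
    - by move=> f fT; split.
    - split; first by move=> f g [? ? H]; split => // x /H.
      by move=> f g h [? ? H1] [? ? H2]; split => // x Ax; rewrite H1 ?H2.
    - move=> f g h [? ? H] hT; split; [exact: trat_max|exact: trat_max|].
      by move=> x /H ->.
    - move=> f g h [? ? H] hT; split; [exact: trat_add|exact: trat_add|].
      by move=> x /H ->.
  apply/seteqP; split.
    by move=> x Ax f g [_ _ H]; apply: H.
  move=> y Vy; apply/not_notP => nAy.
  have [f [g [fT [gT [H fg]]]]] := @sep R n A y Ac nAy.
  by apply: fg; apply: Vy.
move=> [E [[Etr _ _ _ _] ->]].
rewrite (_ : tV E = \bigcap_(fg in [set fg | E fg.1 fg.2]) [set x | fg.1 x = fg.2 x]).
  apply: closed_bigI => fg /= /Etr [fT gT].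
  exact: closed_eqset.
apply/seteqP; split.
  by move=> x Vx [f g] /= Efg; apply: Vx.
by move=> x Hx f g Efg; apply: (Hx (f, g)).
Qed.
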